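(* Let $n\ge 5$ and let $\sigma$ be a maximal simplex of $\Delta_n$ that covers all places. If there exists $w\in\sigma$ with $N(w)\cap\sigma=\{v\}$, then $\sigma=N(v)\cup K_v^{i_0,j_0,k_0}$ for some distinct $i_0,j_0,k_0\in[n]$.
   Context: $\mathbb{I}_n$ is the $n$-dimensional hypercube graph on vertex set $\{0,1\}^n$ (adjacent iff differing in exactly one coordinate), with Hamming distance $d(v,w)=\#\{i: v(i)\ne w(i)\}$, $v(i)$ the $i$-th coordinate. $\Delta_n=\mathcal{VR}(\mathbb{I}_n;3)$ is the simplicial complex whose simplices are the subsets $\sigma\subseteq\{0,1\}^n$ with $d(x,y)\le 3$ for all $x,y\in\sigma$. A simplex $\sigma$ covers all places if for each $i\in[n]=\{1,\dots,n\}$ there are $v,w\in\sigma$ with $v(i)=1$ and $w(i)=0$. For a vertex $v$ and distinct $i_1,\dots,i_k$, $v^{i_1,\dots,i_k}$ is $v$ with exactly coordinates $i_1,\dots,i_k$ changed. $N(v)=\{v^i: i\in[n]\}$. For distinct $i,j,k$, $K_v^{i,j,k}=\{v,v^{i,j},v^{j,k},v^{i,k}\}$. *)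

(* Defs.v *)
From mathcomp Require Import all_boot.
Set Implicit Arguments. Unset Strict Implicit. Unset Printing Implicit Defensive.

Definition vert (n : nat) := {ffun 'I_n -> bool}.

Definition hdist n (v w : vert n) : nat := #|[set i | v i != w i]|.

(* Simplex of Delta_n = VR(I_n;3): nonempty finite vertex set, pairwise distance <= 3 *)
Definition is_simplex n (s : {set vert n}) : Prop :=
  s != set0 /\ forall x y, x \in s -> y \in s -> hdist x y <= 3.

Definition is_maximal_simplex n (s : {set vert n}) : Prop :=
  is_simplex s /\ forall t : {set vert n}, is_simplex t -> s \subset t -> t = s.

Definition covers_all_places n (s : {set vert n}) : Prop :=
  forall i : 'I_n, exists v w, [/\ v \in s, w \in s, v i = true & w i = false].

(* v with the coordinates in I changed: v^{i1,...,ik} for I = {i1,...,ik} *)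
Definition flip n (v : vert n) (I : {set 'I_n}) : vert n :=
  [ffun j => if j \in I then ~~ v j else v j].

Definition nbhd n (v : vert n) : {set vert n} := [set flip v [set i] | i : 'I_n].

Definition Kset n (v : vert n) (i j k : 'I_n) : {set vert n} :=
  [set v; flip v [set i; j]; flip v [set j; k]; flip v [set i; k]].

(* Main.v *)
Require Import Defs.
From mathcomp Require Import all_boot zify.
Set Implicit Arguments. Unset Strict Implicit. Unset Printing Implicit Defensive.

Definition sd (T : finType) (I J : {set T}) := (I :\: J) :|: (J :\: I).

Lemma sdcard (T : finType) (I J : {set T}) : #|sd I J| + 2 * #|I :&: J| = #|I| + #|J|.
Proof.
rewrite /sd cardsU.
have -> : (I :\: J) :&: (J :\: I) = set0.
  by apply/setP=> i; rewrite !inE; case: (i \in I); case: (i \in J).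
rewrite cards0 subn0.
have h1 := cardsID J I. have h2 := cardsID I J. rewrite setIC in h2. lia.
Qed.

Definition D n (v x : vert n) : {set 'I_n} := [set i | x i != v i].

Lemma hdistE n (v x y : vert n) : hdist x y = #|sd (D v x) (D v y)|.
Proof.
rewrite /hdist; apply: eq_card => i; rewrite !inE.
by case: (x i); case: (y i); case: (v i).
Qed.

Lemma Dflip n (v : vert n) I : D v (flip v I) = I.
Proof. by apply/setP=> i; rewrite !inE ffunE; case: (i \in I); case: (v i). Qed.

Lemma flipD n (v x : vert n) : flip v (D v x) = x.
Proof. by apply/ffunP=> i; rewrite ffunE inE; case: (x i); case: (v i). Qed.

Lemma hdist_sym n (x y : vert n) : hdist x y = hdist y x.
Proof. by rewrite /hdist; apply: eq_card => i; rewrite !inE eq_sym. Qed.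

Lemma hdist0 n (x : vert n) : hdist x x = 0.
Proof. by rewrite /hdist; apply/eqP; rewrite cards_eq0; apply/eqP/setP=> i; rewrite !inE eqxx. Qed.

Lemma hdistD n (v x : vert n) : hdist x v = #|D v x|.
Proof. by []. Qed.

Lemma hdist1 n (x y : vert n) : hdist x y = 1 -> x \in nbhd y.
Proof.
move=> /eqP /cards1P [b hb]; apply/imsetP; exists b => //.
apply/ffunP=> i; rewrite ffunE.
have : (i \in [set i | x i != y i]) = (i \in [set b]) by rewrite hb.
rewrite !inE /=.
case: (i == b) => /=.
  by case: (x i); case: (y i).
by case: (x i); case: (y i).
Qed.

Lemma maxP n (s : {set vert n}) (hmax : is_maximal_simplex s) (y : vert n) :
  (forall x, x \in s -> hdist x y <= 3) -> y \in s.
Proof.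
move=> hy; case: hmax => [[hne hs] hm].
have ht : is_simplex (y |: s).
  split; first by apply/set0Pn; exists y; rewrite !inE eqxx.
  move=> x z; rewrite !inE => /orP[/eqP->|hx] /orP[/eqP->|hz].
  - by rewrite hdist0.
  - by rewrite hdist_sym hy.
  - by rewrite hy.
  - by rewrite hs.
have := hm _ ht (subsetUr _ _) => <-.
by rewrite !inE eqxx.
Qed.

Lemma cardI1 (T : finType) (A : {set T}) a : #|A :&: [set a]| = (a \in A).
Proof.
case ha: (a \in A).
  have -> : A :&: [set a] = [set a] by apply/setIidPr; rewrite sub1set.
  by rewrite cards1.
apply/eqP; rewrite cards_eq0; apply/eqP/setP=> i; rewrite !inE.
by case: (eqVneq i a) => [->|]; rewrite ?ha ?andbF // andbT; case: (i \in A).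
Qed.

Lemma card3le (T : finType) (a p q r : T) : #|a |: [set p; q; r]| <= 4.
Proof.
rewrite cardsU1 cardsU cards2 cards1.
case: (a \in _); case: (p != q); simpl; lia.
Qed.

Lemma meet2 (T : finType) (y z p q : T) :
  [set y; z] :&: [set p; q] != set0 -> [|| y == p, y == q, z == p | z == q].
Proof.
case/set0Pn => u; rewrite !inE => /andP[/orP[]/eqP-> /orP[]/eqP->];
  by rewrite eqxx ?orbT.
Qed.

Lemma pairT n (p q r y z : 'I_n) : p != q -> q != r -> p != r -> y != z ->
  y \in [set p; q; r] -> z \in [set p; q; r] ->
  [|| [set y; z] == [set p; q], [set y; z] == [set q; r] | [set y; z] == [set p; r]].
Proof.
move=> pq qr pr yz; rewrite !inE => /orP[/orP[]|]/eqP ey /orP[/orP[]|]/eqP ez; subst;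
 rewrite ?eqxx // in yz; rewrite ?eqxx ?orbT //;
 by rewrite ?(setUC [set r]) ?(setUC [set q] [set p]) eqxx ?orbT.
Qed.

Lemma tri (n : nat) (P : {set 'I_n} -> Prop) (a c0 : 'I_n) :
  c0 != a ->
  (forall A, P A -> #|A| = 2 /\ a \notin A) ->
  (forall A B, P A -> P B -> A :&: B != set0) ->
  (forall c, c != a -> exists2 A, P A & c \notin A) ->
  exists p q r, [/\ p != q, q != r, p != r,
    [/\ P [set p; q], P [set q; r] & P [set p; r]] &
    forall A, P A -> A \subset [set p; q; r]].
Proof.
move=> c0a hP hI hN.
have [A1 hA1 _] := hN c0 c0a.
have [h1 ha1] := hP A1 hA1.
have /cards2P [p [q [pq eA1]]] : #|A1| == 2 by rewrite h1.
subst A1.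
have pa : p != a by apply: contraNneq ha1 => <-; rewrite !inE eqxx.
have qa : q != a by apply: contraNneq ha1 => <-; rewrite !inE eqxx orbT.
have [A2 hA2 pA2] := hN p pa.
have qA2 : q \in A2.
  case/set0Pn: (hI _ _ hA1 hA2) => u; rewrite !inE => /andP[/orP[]/eqP-> //].
  by move=> h; rewrite h in pA2.
have [h2 _] := hP A2 hA2.
have [r [qr eA2]] : exists r, q != r /\ A2 = [set q; r].
  have /cards2P [y [z [yz e]]] : #|A2| == 2 by rewrite h2.
  move: qA2; rewrite e !inE => /orP[]/eqP->.
    by exists z.
  by exists y; split; rewrite 1?eq_sym // setUC.
subst A2.
have pr : p != r by apply: contraNneq pA2 => ->; rewrite !inE eqxx orbT.
have [A3 hA3 qA3] := hN q qa.
have pA3 : p \in A3.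
  case/set0Pn: (hI _ _ hA1 hA3) => u; rewrite !inE => /andP[/orP[]/eqP-> //].
  by move=> h; rewrite h in qA3.
have rA3 : r \in A3.
  case/set0Pn: (hI _ _ hA2 hA3) => u; rewrite !inE => /andP[/orP[]/eqP-> //].
  by move=> h; rewrite h in qA3.
have [h3 _] := hP A3 hA3.
have eA3 : [set p; r] = A3.
  apply/eqP; rewrite eqEcard subUset !sub1set pA3 rA3 h3 cards2 pr //.
exists p, q, r; split => //; first by split => //; rewrite eA3.
move=> A hA.
have [hc _] := hP A hA.
have /cards2P [y [z [yz e]]] : #|A| == 2 by rewrite hc.
subst A.
have m1 := meet2 (hI _ _ hA hA1).
have m2 := meet2 (hI _ _ hA hA2).
rewrite -eA3 in hA3. have m3 := meet2 (hI _ _ hA hA3).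
rewrite subUset !sub1set !inE.
move: pq qr pr yz m1 m2 m3. rewrite -!val_eqE /=. move=> *. lia.
Qed.

Ltac cardlia :=
  repeat match goal with |- context [#|?A|] => let k := fresh "k" in set k := #|A|; clearbody k end; lia.

Opaque D sd.

Theorem mainTheorem8 (n : nat) (hn : 5 <= n) (s : {set vert n})
  (hmax : is_maximal_simplex s) (hcov : covers_all_places s)
  (w v : vert n) (hw : w \in s) (hN : nbhd w :&: s = [set v]) :
  exists i0 j0 k0 : 'I_n, [/\ i0 != j0, j0 != k0, i0 != k0 &
    s = nbhd v :|: Kset v i0 j0 k0].
Proof.
have hv2 : v \in nbhd w :&: s by rewrite hN set11.
move: (hv2); rewrite inE => /andP[hvN hvs].
case/imsetP: hvN => a _ hva.
have hDw : D v w = [set a].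
  by apply/setP=> i; rewrite !inE hva ffunE !inE; case: (i == a); case: (w i).
have hDv : D v v = set0 by apply/setP=> i; rewrite !inE eqxx.
have hsimp : forall x y, x \in s -> y \in s -> hdist x y <= 3.
  by case: hmax => [[_ hs] _].
have F1 : forall x, x \in s -> #|D v x| <= 3.
  by move=> x hx; rewrite -hdistD; apply: hsimp.
have F2 : forall x, x \in s -> #|D v x| + 1 <= 3 + 2 * (a \in D v x).
  move=> x hx; have := hsimp x w hx hw; rewrite (hdistE v) hDw.
  have := sdcard (D v x) [set a]; rewrite cardI1 cards1. cardlia.
have F3 : forall x, x \in s -> hdist x w = 1 -> x = v.
  move=> x hx h1; have : x \in nbhd w :&: s by rewrite inE hdist1.
  by rewrite hN inE => /eqP.
have F4 : forall x, x \in s -> 2 <= #|D v x| -> a \in D v x -> #|D v x| = 3.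
  move=> x hx h2 ha.
  have : #|D v x| != 2.
    apply/eqP=> e.
    have hx1 : hdist x w = 1.
      rewrite (hdistE v) hDw.
      have := sdcard (D v x) [set a]; rewrite cardI1 cards1 ha. move: e; cardlia.
    have := F3 x hx hx1 => ex; rewrite ex hDv cards0 in e. by [].
  have := F1 x hx. move: h2; cardlia.
pose E x := D v x :\ a.
have hEc : forall x, #|D v x| = (a \in D v x) + #|E x| by move=> x; apply: cardsD1.
have hE2 : forall x, x \in s -> 2 <= #|D v x| -> #|E x| = 2.
  move=> x hx h2; have := hEc x; have := F2 x hx; have := F1 x hx.
  case ha: (a \in D v x); [have := F4 x hx h2 ha|]; move: h2; cardlia.
have hEI : forall x y, x \in s -> 2 <= #|D v x| -> y \in s -> 2 <= #|D v y| ->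
    E x :&: E y != set0.
  move=> x y hx h2x hy h2y; rewrite -card_gt0.
  have hsub : sd (E x) (E y) \subset sd (D v x) (D v y).
    apply/subsetP=> i; rewrite !inE.
    by case: (i == a); case: (i \in D v x); case: (i \in D v y).
  have := subset_leq_card hsub; rewrite -hdistE.
  have := hsimp x y hx hy; have := sdcard (E x) (E y).
  rewrite (hE2 x hx h2x) (hE2 y hy h2y). cardlia.
have hcommon : forall c, c != a ->
    (forall x, x \in s -> 2 <= #|D v x| -> c \in D v x) -> False.
  move=> c ca hc.
  pose y := flip v [set a; c].
  have hDy : D v y = [set a; c] by rewrite Dflip.
  have hys : y \in s.
    apply: (maxP hmax) => x hx.
    rewrite (hdistE v) hDy.
    have := sdcard (D v x) [set a; c]; rewrite cards2 eq_sym ca.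
    have := F1 x hx.
    case: (leqP 2 #|D v x|) => h2.
      have : 0 < #|D v x :&: [set a; c]|.
        by rewrite card_gt0; apply/set0Pn; exists c; rewrite inE (hc x hx h2) !inE eqxx orbT.
      move: h2; cardlia.
    move: h2; cardlia.
  have hy1 : hdist y w = 1.
    rewrite (hdistE v) hDy hDw.
    have := sdcard [set a; c] [set a]; rewrite cardI1 cards1 cards2 eq_sym ca !inE eqxx /=.
    cardlia.
  have := F3 y hys hy1 => ey.
  have : a \in D v y by rewrite hDy !inE eqxx.
  by rewrite ey hDv inE.
have hNC : forall c, c != a -> exists2 A, (exists x, [/\ x \in s, 2 <= #|D v x| & A = E x]) & c \notin A.
  move=> c ca.
  case: (boolP [exists x, [&& x \in s, 2 <= #|D v x| & c \notin D v x]]).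
    case/existsP=> x /and3P[hx h2 hcx]; exists (E x); first by exists x.
    by rewrite /E in_setD1 negb_and hcx orbT.
  move/existsPn=> hall; exfalso; apply: (hcommon c ca) => x hx h2.
  by have := hall x; rewrite hx h2 /= negbK.
have [c0 hc0] : exists c0 : 'I_n, c0 != a.
  have : 0 < #|[set~ a]| by rewrite cardsC1 card_ord; cardlia.
  by rewrite card_gt0 => /set0Pn [c]; rewrite !inE => hc; exists c.
have := tri hc0 (P := fun A => exists x, [/\ x \in s, 2 <= #|D v x| & A = E x]).
case.
- move=> A [x [hx h2 ->]]; split; first exact: hE2.
  by rewrite /E !inE eqxx.
- by move=> A B [x [hx h2x ->]] [y [hy h2y ->]]; apply: hEI.
- exact: hNC.
move=> p [q [r [pq qr pr [[x1 [hx1 h21 e1]] [x2 [hx2 h22 e2]] [x3 [hx3 h23 e3]]] hsub]]].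
set T := [set p; q; r].
have hsE : forall x, x \in s -> 2 <= #|D v x| -> E x \subset T.
  by move=> x hx h2; apply: hsub; exists x.
have hDE : forall x, D v x \subset a |: E x.
  by move=> x; apply/subsetP=> i hi; rewrite in_setU1 in_setD1 hi andbT; case: (i == a).
have hcardT : #|a |: T| <= 4 by apply: card3le.
have htr : forall x, x \in s -> 2 <= #|D v x| -> a \notin D v x.
  move=> x0 hx0 h20; apply/negP => ha0.
  have h30 := F4 x0 hx0 h20 ha0.
  have hall : forall x, x \in s -> D v x \subset a |: T.
    move=> x hx.
    have := F1 x hx.
    case: (leqP 2 #|D v x|) => h2 h3.
      apply: subset_trans (hDE x) _; apply: setUS; exact: hsE.
    have hx0T : D v x0 \subset a |: T.
      apply: subset_trans (hDE x0) _; apply: setUS; exact: hsE.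
    case: (posnP #|D v x|) => h0.
      by move/eqP: h0; rewrite cards_eq0 => /eqP ->; apply: sub0set.
    apply: subset_trans hx0T.
    have hd := hsimp x x0 hx hx0; rewrite (hdistE v) in hd.
    have hsc := sdcard (D v x) (D v x0).
    have hIx : #|D v x| <= #|D v x :&: D v x0|.
      by move: hd hsc h0 h2 h30; clear; cardlia.
    have : D v x :&: D v x0 == D v x by rewrite eqEcard subsetIl hIx.
    by move/eqP/setIidPl.
  have : 0 < #|~: (a |: T)| by have := cardsC (a |: T); rewrite card_ord; move: hn hcardT; clear; cardlia.
  rewrite card_gt0 => /set0Pn [i]; rewrite inE => hi.
  have [y1 [y2 [hy1 hy2 e1' e2']]] := hcov i.
  case hvi: (v i).
    have : i \in D v y2 by rewrite inE e2' hvi.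
    by move/(subsetP (hall _ hy2)); rewrite (negbTE hi).
  have : i \in D v y1 by rewrite inE e1' hvi.
  by move/(subsetP (hall _ hy1)); rewrite (negbTE hi).
have hle2 : forall x, x \in s -> #|D v x| <= 2.
  move=> x hx; case: (leqP 2 #|D v x|) => h2; last by move: h2; clear; cardlia.
  have := F2 x hx; rewrite (negbTE (htr x hx h2)); clear; cardlia.
have hDEq : forall x, x \in s -> 2 <= #|D v x| -> D v x = E x.
  move=> x hx h2; apply/setP=> i; rewrite /E in_setD1.
  case: (eqVneq i a) => [->|] //=; exact: negbTE (htr x hx h2).
have hsing : forall b, flip v [set b] \in s.
  move=> b; apply: (maxP hmax) => x hx.
  rewrite (hdistE v) Dflip.
  have := sdcard (D v x) [set b]; have := hle2 x hx; rewrite cards1; clear; cardlia.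
have hK : forall x, x \in s -> 2 <= #|D v x| -> flip v (E x) = x.
  by move=> x hx h2; rewrite -hDEq // flipD.
exists p, q, r; split => //.
apply/setP=> x; apply/idP/idP.
  move=> hx; rewrite inE.
  have := hle2 x hx.
  case: (leqP 2 #|D v x|) => h2 hle.
    apply/orP; right.
    have hE := hsE x hx h2; rewrite -hDEq // in hE.
    have /cards2P [y [z [yz eD]]] : #|D v x| == 2 by apply/eqP; move: h2 hle; clear; cardlia.
    rewrite eD subUset !sub1set in hE; case/andP: hE => hy hz.
    rewrite -(flipD v x) eD /Kset !inE.
    by case/or3P: (pairT pq qr pr yz hy hz) => /eqP->; rewrite eqxx ?orbT.
  case: (posnP #|D v x|) => h0.
    have : D v x = set0 by apply/eqP; rewrite -cards_eq0 h0.
    move=> e; apply/orP; right; rewrite /Kset !inE.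
    have -> : x = v by rewrite -(flipD v x) e; apply/ffunP=> i; rewrite ffunE inE.
    by rewrite eqxx.
  have /cards1P [b eb] : #|D v x| == 1 by apply/eqP; move: h0 h2; clear; cardlia.
  apply/orP; left; apply/imsetP; exists b => //.
  by rewrite -(flipD v x) eb.
rewrite inE => /orP[/imsetP [b _ ->] //|].
rewrite /Kset !inE => /orP[/orP[/orP[]|]|] /eqP->.
- exact: hvs.
- by rewrite e1 hK.
- by rewrite e2 hK.
- by rewrite e3 hK.
Qed.
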